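(* Let $p>5$ be a prime, $q=p^h$, and let $\mathcal{F}$ be the projective closure of $ax^n+by^m=1$ over $\mathbb{F}_q$, with $a,b\in\mathbb{F}_q^*$ and $m,n$ positive integers with $n\ge m>2$. If $p\mid(n+1)$ and $p\mid(m-1)$, then $\mathcal{F}$ is $\mathbb{F}_q$-Frobenius classical with respect to conics.
   Context: With $\varphi_0,\dots,\varphi_5$ the monomials of degree 2 in $x,y,1$, $\tau$ separating and $D^{(k)}_\tau$ Hasse derivatives, the $\mathbb{F}_q$-Frobenius order sequence w.r.t. conics is the lexicographically smallest $\nu_0<\dots<\nu_4$ such that the $6\times6$ determinant with first row $(\varphi_j^q)_j$ and rows $(D^{(\nu_i)}_\tau\varphi_j)_j$ is nonzero; the curve is $\mathbb{F}_q$-Frobenius classical w.r.t. conics if $\nu_i=i$ for all $i$. *)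

(* Defs.v *)
From mathcomp Require Import all_boot all_algebra all_field.
Set Implicit Arguments. Unset Strict Implicit. Unset Printing Implicit Defensive.
Import GRing.Theory.
Local Open Scope ring_scope.

Definition is_hasse_derivation (F K : fieldType) (iota : {rmorphism F -> K})
    (x : K) (D : nat -> K -> K) : Prop :=
  (forall u, D 0%N u = u) /\
  (forall k u v, D k (u + v) = D k u + D k v) /\
  (forall k u v, D k (u * v) = \sum_(i < k.+1) D i u * D (k - i)%N v) /\
  (forall i j u, D i (D j u) = ('C(i + j, i))%:R * D (i + j)%N u) /\
  (forall k c, (0 < k)%N -> D k (iota c) = 0) /\
  D 1%N x = 1 /\ (forall k, (1 < k)%N -> D k x = 0).

Definition transcendental_over (F K : fieldType) (iota : {rmorphism F -> K})
    (x : K) : Prop :=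
  forall P : {poly F}, P != 0 -> (map_poly iota P).[x] != 0.

Definition conic_monomials (K : fieldType) (x y : K) (j : 'I_6) : K :=
  nth 0 [:: 1; x; y; x ^+ 2; x * y; y ^+ 2] j.

Definition frob_mx (K : fieldType) (q : nat) (D : nat -> K -> K)
    (phi : 'I_6 -> K) (nu : 'I_5 -> nat) : 'M[K]_6 :=
  \matrix_(i < 6, j < 6)
    (if i == ord0 then phi j ^+ q else D (nu (inord i.-1)) (phi j)).

Definition strictly_incr (nu : 'I_5 -> nat) : Prop :=
  forall i j : 'I_5, (i < j)%N -> (nu i < nu j)%N.

Definition lex_lt (nu mu : 'I_5 -> nat) : Prop :=
  exists i : 'I_5, (forall j : 'I_5, (j < i)%N -> nu j = mu j) /\ (nu i < mu i)%N.

Definition is_frobenius_order_seq (K : fieldType) (q : nat) (D : nat -> K -> K)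
    (phi : 'I_6 -> K) (nu : 'I_5 -> nat) : Prop :=
  strictly_incr nu /\ \det (frob_mx q D phi nu) != 0 /\
  (forall mu, strictly_incr mu -> \det (frob_mx q D phi mu) != 0 -> ~ lex_lt mu nu).

Definition frobenius_classical_conics (K : fieldType) (q : nat)
    (D : nat -> K -> K) (x y : K) : Prop :=
  is_frobenius_order_seq q D (conic_monomials x y) (fun i => nat_of_ord i).

(* Main.v *)
Require Import Defs.
From mathcomp Require Import all_boot all_algebra all_field.
From mathcomp Require Import ring zify.
Set Implicit Arguments. Unset Strict Implicit. Unset Printing Implicit Defensive.
Import GRing.Theory.
Local Open Scope ring_scope.

Lemma hD0 (F K : fieldType) (iota : {rmorphism F -> K}) x D :
  is_hasse_derivation iota x D -> forall u, D 0%N u = u.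
Proof. by case. Qed.
Lemma hDD (F K : fieldType) (iota : {rmorphism F -> K}) x D :
  is_hasse_derivation iota x D -> forall k u v, D k (u + v) = D k u + D k v.
Proof. by case=> _ []. Qed.
Lemma hDM (F K : fieldType) (iota : {rmorphism F -> K}) x D :
  is_hasse_derivation iota x D ->
  forall k u v, D k (u * v) = \sum_(i < k.+1) D i u * D (k - i)%N v.
Proof. by case=> _ [] _ []. Qed.
Lemma hDDi (F K : fieldType) (iota : {rmorphism F -> K}) x D :
  is_hasse_derivation iota x D ->
  forall i j u, D i (D j u) = ('C(i + j, i))%:R * D (i + j)%N u.
Proof. by case=> _ [] _ [] _ []. Qed.
Lemma hDc (F K : fieldType) (iota : {rmorphism F -> K}) x D :
  is_hasse_derivation iota x D -> forall k c, (0 < k)%N -> D k (iota c) = 0.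
Proof. by case=> _ [] _ [] _ [] _ []. Qed.
Lemma hDx1 (F K : fieldType) (iota : {rmorphism F -> K}) x D :
  is_hasse_derivation iota x D -> D 1%N x = 1.
Proof. by case=> _ [] _ [] _ [] _ [] _ []. Qed.
Lemma hDxk (F K : fieldType) (iota : {rmorphism F -> K}) x D :
  is_hasse_derivation iota x D -> forall k, (1 < k)%N -> D k x = 0.
Proof. by case=> _ [] _ [] _ [] _ [] _ []. Qed.

Lemma hDz (F K : fieldType) (iota : {rmorphism F -> K}) x D :
  is_hasse_derivation iota x D -> forall k, D k 0 = 0.
Proof.
move=> hD k; apply: (addIr (D k 0)); by rewrite add0r -(hDD hD) addr0.
Qed.

Lemma hDN (F K : fieldType) (iota : {rmorphism F -> K}) x D :
  is_hasse_derivation iota x D -> forall k u, D k (- u) = - D k u.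
Proof.
move=> hD k u; apply/eqP; rewrite -subr_eq0 opprK -(hDD hD) addNr.
by rewrite (hDz hD).
Qed.

Lemma hD1 (F K : fieldType) (iota : {rmorphism F -> K}) x D :
  is_hasse_derivation iota x D -> forall k, (0 < k)%N -> D k 1 = 0.
Proof. by move=> hD k k0; rewrite -(rmorph1 iota) (hDc hD). Qed.

Lemma hDMx (F K : fieldType) (iota : {rmorphism F -> K}) x D :
  is_hasse_derivation iota x D ->
  forall k w, D k.+1 (x * w) = x * D k.+1 w + D k w.
Proof.
move=> hD k w; rewrite (hDM hD) !big_ord_recl /= (hD0 hD) (hDx1 hD) mul1r.
rewrite big1 ?addr0 ?subn1 //= => i _.
by rewrite (hDxk hD) ?mul0r.
Qed.

Definition isconst (K : fieldType) (D : nat -> K -> K) (c : K) :=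
  forall k, (0 < k <= 4)%N -> D k c = 0.

Lemma hDcM (F K : fieldType) (iota : {rmorphism F -> K}) x D :
  is_hasse_derivation iota x D -> forall c u k, isconst D c -> (k <= 4)%N ->
  D k (c * u) = c * D k u.
Proof.
move=> hD c u k hc k4; rewrite (hDM hD) big_ord_recl (hD0 hD) subn0 big1 ?addr0 //.
move=> i _; rewrite hc ?mul0r //=.
by apply: leq_trans k4; rewrite ltn_ord.
Qed.


Lemma hD1M (F K : fieldType) (iota : {rmorphism F -> K}) x D :
  is_hasse_derivation iota x D -> forall u v, D 1%N (u * v) = u * D 1%N v + D 1%N u * v.
Proof.
move=> hD u v; rewrite (hDM hD) !big_ord_recl big_ord0 /= !(hD0 hD) addr0.
by rewrite addrC.
Qed.

Lemma hD1X (F K : fieldType) (iota : {rmorphism F -> K}) x D :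
  is_hasse_derivation iota x D -> forall u j, D 1%N (u ^+ j.+1) = j.+1%:R * u ^+ j * D 1%N u.
Proof.
move=> hD u; elim=> [|j IH]; first by rewrite expr1 expr0 mulr1 mul1r.
rewrite exprS (hD1M hD) IH exprS; rewrite [_.+2%:R]mulrS; ring.
Qed.

Lemma hD1V (F K : fieldType) (iota : {rmorphism F -> K}) x D :
  is_hasse_derivation iota x D -> forall u, u != 0 -> D 1%N u = 0 -> D 1%N u^-1 = 0.
Proof.
move=> hD u u0 du; have := hD1M hD u u^-1.
rewrite mulfV // (hD1 hD) // du mul0r addr0 => /esym/eqP.
by rewrite mulf_eq0 (negPf u0) => /eqP.
Qed.

Lemma hD1const (F K : fieldType) (iota : {rmorphism F -> K}) x D :
  is_hasse_derivation iota x D -> (2%:R != 0 :> K) -> (3%:R != 0 :> K) ->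
  (4%:R != 0 :> K) -> forall c, D 1%N c = 0 -> isconst D c.
Proof.
move=> hD h2 h3 h4 c d1.
have d2 : D 2 c = 0.
  have := hDDi hD 1 1 c; rewrite d1 (hDz hD) /= => /esym/eqP.
  by rewrite mulf_eq0 (negPf h2) => /eqP.
have d3 : D 3 c = 0.
  have := hDDi hD 1 2 c; rewrite d2 (hDz hD) /= => /esym/eqP.
  by rewrite mulf_eq0 (negPf h3) => /eqP.
have d4 : D 4 c = 0.
  have := hDDi hD 1 3 c; rewrite d3 (hDz hD) /= => /esym/eqP.
  by rewrite mulf_eq0 (negPf h4) => /eqP.
by case=> [|[|[|[|[|k]]]]] //.
Qed.

Lemma hDinvx (F K : fieldType) (iota : {rmorphism F -> K}) x D :
  is_hasse_derivation iota x D -> x != 0 ->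
  forall k, D k x^-1 = (-1) ^+ k * x^-1 ^+ k.+1.
Proof.
move=> hD x0; elim=> [|k IH]; first by rewrite (hD0 hD) expr0 mul1r expr1.
have := hDMx hD k x^-1; rewrite mulfV // (hD1 hD) // IH => /esym/eqP.
rewrite addr_eq0 => /eqP H.
have -> : D k.+1 x^-1 = x^-1 * (x * D k.+1 x^-1) by rewrite mulrA mulVf // mul1r.
by rewrite H !exprS; ring.
Qed.

Lemma hDinvx2 (F K : fieldType) (iota : {rmorphism F -> K}) x D :
  is_hasse_derivation iota x D -> x != 0 ->
  forall k, D k (x^-1 ^+ 2) = (-1) ^+ k * k.+1%:R * x^-1 ^+ k.+2.
Proof.
move=> hD x0; elim=> [|k IH]; first by rewrite (hD0 hD) expr0 mul1r mul1r.
have := hDMx hD k (x^-1 ^+ 2).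
rewrite expr2 mulrA mulfV // mul1r -expr2 (hDinvx hD x0) IH => H0.
have H : x * D k.+1 (x^-1 ^+ 2) = (-1) ^+ k.+1 * x^-1 ^+ k.+2 - (-1) ^+ k * k.+1%:R * x^-1 ^+ k.+2.
  by rewrite H0 addrK.
have -> : D k.+1 (x^-1 ^+ 2) = x^-1 * (x * D k.+1 (x^-1 ^+ 2)).
  by rewrite mulrA mulVf // mul1r.
rewrite H !exprS [k.+2%:R]mulrS [k.+1%:R]mulrS; ring.
Qed.


Lemma pow1X (R : comNzRingType) (X Q : R) j :
  exists S, (1 + X * Q) ^+ j = 1 + X * (Q * j%:R + X * S).
Proof.
elim: j => [|j [S IH]]; first by exists 0; rewrite expr0; ring.
exists (Q ^+ 2 * j%:R + S + S * (X * Q)).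
rewrite exprS IH mulrS; ring.
Qed.


Lemma Xn_neq0 (F : fieldType) j : 'X^j != 0 :> {poly F}.
Proof. by rewrite expf_eq0 polyX_eq0 andbF. Qed.

Lemma poly_part (F : fieldType) (a : F) n m q k :
  a != 0 -> (0 < n)%N -> (0 < m)%N -> (1 < q)%N -> (0 < k)%N -> m%:R = 1 :> F ->
  ('X^q - a%:P * 'X^(n+1)) ^+ m != (1 - a%:P * 'X^n) ^+ k * 'X^(q * m).
Proof.
move=> a0 n0 m0 q1 k0 mE; apply/negP => /eqP H.
have [lt|le] := ltnP (n + 1) q.
  pose e := (q - (n + 1))%N.
  have qE : q = (n + 1 + e)%N by rewrite /e subnKC // ltnW.
  have VE : 'X^q - a%:P * 'X^(n+1) = 'X^(n+1) * ('X^e - a%:P).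
    by rewrite {1}qE exprD mulrBr [a%:P * _]mulrC.
  move: H; rewrite VE exprMn -exprM qE (mulnDl (n+1) e m) exprD mulrCA => /mulfI H.
  have := H (Xn_neq0 _ _) => /(congr1 (horner^~ 0)).
  have e0 : (0 < e)%N by rewrite /e subn_gt0.
  rewrite !hornerE !expr0n !eqn0Ngt e0 muln_gt0 e0 m0 /= mulr0 sub0r.
  by move/eqP; rewrite expf_eq0 oppr_eq0 (negPf a0) andbF.
pose d := (n + 1 - q)%N.
have nE : (n + 1 = q + d)%N by rewrite /d subnKC.
have VE : 'X^q - a%:P * 'X^(n+1) = 'X^q * (1 - a%:P * 'X^d).
  by rewrite nE exprD mulrBr mulr1 mulrCA.
move: H; rewrite VE exprMn -exprM mulrC => /mulIf H.
have {H} H := H (Xn_neq0 _ _).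
case: (posnP d) => [d0|dpos].
  move: H; rewrite d0 expr0 mulr1 -polyCB -rmorphXn /= => /(congr1 (fun p : {poly F} => size p)).
  have sU : size (1 - a%:P * 'X^n : {poly F}) = n.+1.
    by rewrite addrC size_polyDl size_polyN ?size_Cmul ?size_polyXn // size_polyC oner_neq0 /= ltnS.
  move=> H; have := size_exp (1 - a%:P * 'X^n) k; rewrite -H sU.
  have := size_polyC_leq1 ((1 - a) ^+ m).
  by case: (size _) => [|[|]] //= _ /esym/eqP; rewrite muln_eq0 !eqn0Ngt n0 k0.
have [R1 E1] := pow1X 'X^d (- a%:P) m.
have [R2 E2] := pow1X 'X^n (- a%:P) k.
move: H; rewrite -!mulNr ![_ * 'X^_]mulrC E1 E2 => /addrI.
have nE' : n = (d + (n - d))%N by rewrite /d; lia.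
rewrite {1}nE' exprD -mulrA => /mulfI H.
have := H (Xn_neq0 _ _) => /(congr1 (horner^~ 0)).
have nd : (0 < n - d)%N by rewrite /d; lia.
rewrite !hornerE !expr0n !hornerMn !hornerE !eqn0Ngt dpos nd /= !mul0r !addr0.
by rewrite mE mulr1 => /eqP; rewrite oppr_eq0 (negPf a0).
Qed.


Lemma frob_row (K : fieldType) q (D : nat -> K -> K) phi (v : 'rV[K]_6) j :
  (v *m frob_mx q D phi (fun i => nat_of_ord i)) 0 j =
  v 0 0 * phi j ^+ q + \sum_(k < 5) v 0 (lift ord0 k) * D k (phi j).
Proof.
rewrite mxE big_ord_recl mxE /=; congr (_ + _); apply: eq_bigr => k _.
by rewrite mxE /= inord_val.
Qed.

Lemma sum5 (K : fieldType) (f : 'I_5 -> K) :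
  \sum_(k < 5) f k = f ord0 + f (lift ord0 ord0) + f (lift ord0 (lift ord0 ord0))
    + f (lift ord0 (lift ord0 (lift ord0 ord0)))
    + f (lift ord0 (lift ord0 (lift ord0 (lift ord0 ord0)))).
Proof. by rewrite !big_ord_recl big_ord0 addr0 !addrA. Qed.

Lemma row6_eq0 (K : fieldType) (v : 'rV[K]_6) :
  v 0 0 = 0 -> (forall k : 'I_5, v 0 (lift ord0 k) = 0) -> v = 0.
Proof.
move=> h0 hk; apply/rowP => i; rewrite mxE.
by case: (unliftP ord0 i) => [k ->|->]; rewrite ?hk ?h0.
Qed.

Lemma ord5_cases (P : 'I_5 -> Prop) :
  P ord0 -> P (lift ord0 ord0) -> P (lift ord0 (lift ord0 ord0)) ->
  P (lift ord0 (lift ord0 (lift ord0 ord0))) ->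
  P (lift ord0 (lift ord0 (lift ord0 (lift ord0 ord0)))) -> forall k, P k.
Proof.
move=> p0 p1 p2 p3 p4 k.
case: (unliftP ord0 k) => [k1 ->|->] //.
case: (unliftP ord0 k1) => [k2 ->|->] //.
case: (unliftP ord0 k2) => [k3 ->|->] //.
case: (unliftP ord0 k3) => [k4 ->|->] //.
by case: (unliftP ord0 k4) => [[]|->].
Qed.



Lemma sum5D (K : fieldType) (D : nat -> K -> K) (w : 'I_5 -> K) f :
  \sum_(k < 5) w k * D k f = w (inord 0) * D 0%N f + w (inord 1) * D 1%N f
    + w (inord 2) * D 2%N f + w (inord 3) * D 3%N f + w (inord 4) * D 4%N f.
Proof.
rewrite !big_ord_recl big_ord0 addr0 !addrA.
by repeat congr (_ + _); congr (w _ * _); apply: val_inj; rewrite /= inordK.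
Qed.

Lemma ord5_inord (P : 'I_5 -> Prop) :
  P (inord 0) -> P (inord 1) -> P (inord 2) -> P (inord 3) -> P (inord 4) -> forall k, P k.
Proof.
move=> p0 p1 p2 p3 p4 k; rewrite -(inord_val k).
by case: k => [[|[|[|[|[|//]]]]] Hk].
Qed.


Lemma nat_aux1 m : (2 < m)%N -> (m - 1 = (m - 2).+1)%N /\ ((m - 2).+1 = m.-1)%N.
Proof. lia. Qed.
Lemma nat_aux2 a i : (0 < i)%N -> (i.-1 < a)%N -> (a < i)%N -> False.
Proof. lia. Qed.
Lemma nat_aux3 j p : (0 < j)%N -> (j < p)%N -> (j <= p)%N -> (p <= j)%N -> False.
Proof. lia. Qed.

Theorem proposition3p14
  (p h : nat) (F : finFieldType) (K : fieldType) (iota : {rmorphism F -> K})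
  (a b : F) (n m : nat) (x y : K) (D : nat -> K -> K) :
  prime p -> (5 < p)%N -> #|F| = (p ^ h)%N ->
  a != 0 -> b != 0 ->
  (0 < m)%N -> (0 < n)%N -> (m <= n)%N -> (2 < m)%N ->
  (p %| n.+1)%N -> (p %| m.-1)%N ->
  transcendental_over iota x ->
  iota a * x ^+ n + iota b * y ^+ m = 1 ->
  is_hasse_derivation iota x D ->
  frobenius_classical_conics (p ^ h)%N D x y.
Proof.
move=> pp p5 cardF a0 b0 m0 n0 mn m2 pn pm tr curve hD.
set q := (p ^ h)%N.
have pF : p \in [pchar F] by apply: card_finPcharP cardF pp.
have pK : p \in [pchar K] by apply: rmorph_pchar pF.
have q1 : (1 < q)%N by rewrite /q -cardF card_finNzRing_gt1.
have bq : iota b ^+ q = iota b by rewrite -rmorphXn /q -cardF expf_card.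
have natK0 j : (p %| j)%N -> j%:R = 0 :> K by rewrite (dvdn_pcharf pK) => /eqP.
have natKn0 j : (0 < j < p)%N -> j%:R != 0 :> K.
  move=> /andP[j0 jp]; rewrite -(dvdn_pcharf pK); apply/negP => /dvdn_leq.
  by move=> /(_ j0); rewrite leqNgt jp.
have mF : m%:R = 1 :> F.
  have : (p %| m.-1)%N by [].
  rewrite (dvdn_pcharf pF) => /eqP h1.
  by rewrite -[m]prednK // -addn1 natrD h1 add0r.
set ia := iota a; set ib := iota b.
have ia0 : ia != 0 by rewrite fmorph_eq0.
have ib0 : ib != 0 by rewrite fmorph_eq0.
have x0 : x != 0.
  by have := tr 'X; rewrite polyX_eq0 map_polyX hornerX; apply.
set U := 1 - ia * x ^+ n.
have U0 : U != 0.
  have := tr (1 - a%:P * 'X^n); rewrite rmorphB rmorph1 rmorphM /= map_polyC map_polyXn.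
  rewrite !hornerE; apply; apply/eqP => /(congr1 (horner^~ 0)).
  by rewrite !hornerE expr0n eqn0Ngt n0 /= mulr0 subr0 => /eqP; rewrite oner_eq0.
have ibym : ib * y ^+ m = U by rewrite /U -curve addrC addKr.
have y0 : y != 0.
  by apply: contraNneq U0 => y0; rewrite -ibym y0 expr0n eqn0Ngt m0 mulr0.
have ym : y ^+ m = y ^+ (m - 1) * y by rewrite -exprSr subn1 prednK.
set X := x ^+ (n + 1); set Y := y ^+ (m - 1).
set c := ib * Y; set e := ia * X.
have c0 : c != 0 by rewrite mulf_neq0 // expf_neq0.
have e0 : e != 0 by rewrite mulf_neq0 // expf_neq0.
have G : c * (x * y) = x - e.
  have -> : c * (x * y) = x * (ib * y ^+ m) by rewrite ym /c /Y; ring.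
  by rewrite ibym /U /e /X exprD expr1; ring.
have Ene : c * (x ^+ q * y ^+ q) - x ^+ q + e != 0.
  apply/negP => /eqP E0.
  set V := x ^+ q - e.
  have H1 : U * (x ^+ q * y ^+ q) = y * V.
    rewrite -ibym ym /V; apply/eqP; rewrite -subr_eq0; apply/eqP.
    rewrite -[RHS](mulr0 y) -E0 /c /Y /V /e /X /U. ring.
  have H2 : (U * (x ^+ q * y ^+ q)) ^+ m = (y * V) ^+ m by rewrite H1.
  have ym' : y ^+ m = U / ib by rewrite -ibym mulrC mulKf.
  have yqm : y ^+ (q * m) = U ^+ q / ib by rewrite mulnC exprM ym' exprMn exprVn bq.
  rewrite !exprMn -!exprM yqm ym' in H2.
  have H3 : U ^+ (m + q - 1) * x ^+ (q * m) = V ^+ m.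
    apply: (mulfI U0); rewrite mulrA -exprS.
    have -> : (m + q - 1).+1 = (m + q)%N by rewrite subn1 prednK // addn_gt0 m0.
    rewrite exprD; apply: (mulIf ib0).
    have key : forall (U' X' Uq Um Vm ib' : K), ib' != 0 ->
        Um * (X' * (Uq / ib')) = U' / ib' * Vm -> Um * Uq * X' * ib' = U' * Vm * ib'.
      move=> U' X' Uq Um Vm ib' nz H.
      transitivity (Um * (X' * (Uq / ib')) * ib' * ib'); first by field.
      by rewrite H; field.
    exact: key.
  have k0 : (0 < m + q - 1)%N by rewrite subn_gt0 (leq_trans q1) // leq_addl.
  have Pn0 := poly_part a0 n0 m0 q1 k0 mF.
  have := tr (('X^q - a%:P * 'X^(n+1)) ^+ m - (1 - a%:P * 'X^n) ^+ (m + q - 1) * 'X^(q * m)).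
  rewrite subr_eq0 Pn0 => /(_ isT).
  rewrite rmorphB /= rmorphM /= !rmorphXn /= !rmorphB /= rmorph1 !rmorphM /=.
  rewrite !map_polyC !map_polyXn map_polyX /= !hornerE -/ia.
  by move: H3; rewrite /V /e /X /U => ->; rewrite subrr eqxx.
have h2 : 2%:R != 0 :> K by apply: natKn0; rewrite /= (ltn_trans _ p5).
have h3 : 3%:R != 0 :> K by apply: natKn0; rewrite /= (ltn_trans _ p5).
have h4 : 4%:R != 0 :> K by apply: natKn0; rewrite /= (ltn_trans _ p5).
have d1mul u v : D 1%N u = 0 -> D 1%N v = 0 -> D 1%N (u * v) = 0.
  by move=> du dv; rewrite (hD1M hD) du dv mulr0 mul0r addr0.
have d1add u v : D 1%N u = 0 -> D 1%N v = 0 -> D 1%N (u + v) = 0.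
  by move=> du dv; rewrite (hDD hD) du dv addr0.
have d1opp u : D 1%N u = 0 -> D 1%N (- u) = 0.
  by move=> du; rewrite (hDN hD) du oppr0.
have d1iota (t : F) : D 1%N (iota t) = 0 by rewrite (hDc hD).
have dY : D 1%N Y = 0.
  have [e1 e2] := nat_aux1 m2.
  by rewrite /Y e1 (hD1X hD) natK0 ?mul0r // e2.
have dX : D 1%N X = 0.
  by rewrite /X addn1 (hD1X hD) natK0 ?mul0r.
have dc : D 1%N c = 0 by apply: d1mul => //; apply: d1iota.
have de : D 1%N e = 0 by apply: d1mul => //; apply: d1iota.
have cst u : D 1%N u = 0 -> isconst D u by apply: (hD1const hD).
split.
  by move=> i j.
split; last first.
  move=> mu incr _ [i [Hlt Hi]].
  move: Hi; case: (posnP i) => [->|ipos] //.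
  have ji : (i.-1 < 5)%N by rewrite (leq_ltn_trans (leq_pred _)).
  have := incr (Ordinal ji) i; rewrite /= prednK // leqnn => /(_ isT).
  rewrite Hlt; last by rewrite /= prednK.
  move=> g1 g2; exact: (nat_aux2 ipos g1 g2). apply/negP => /det0P [v vn0 vM].
have eqj j : v 0 0 * (conic_monomials x y j) ^+ q +
    \sum_(k < 5) v 0 (lift ord0 k) * D k (conic_monomials x y j) = 0.
  by rewrite -frob_row vM mxE.
set v0 := v 0 0.
pose w (k : 'I_5) := v 0 (lift ord0 k).
have eqj' j : v0 * (conic_monomials x y j) ^+ q +
   (w (inord 0) * D 0%N (conic_monomials x y j) + w (inord 1) * D 1%N (conic_monomials x y j)
    + w (inord 2) * D 2%N (conic_monomials x y j) + w (inord 3) * D 3%N (conic_monomials x y j)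
    + w (inord 4) * D 4%N (conic_monomials x y j)) = 0.
  by rewrite -(sum5D D w); exact: eqj.
have E0 := eqj' (@Ordinal 6 0 isT).
have E1 := eqj' (@Ordinal 6 1 isT).
have E2 := eqj' (@Ordinal 6 2 isT).
have E3 := eqj' (@Ordinal 6 3 isT).
have E4 := eqj' (@Ordinal 6 4 isT).
have E5 := eqj' (@Ordinal 6 5 isT).
rewrite /conic_monomials /= in E0 E1 E2 E3 E4 E5.
have Dx1 : D 1%N x = 1 := hDx1 hD.
have Dx2 : D 2%N x = 0 by rewrite (hDxk hD).
have Dx3 : D 3%N x = 0 by rewrite (hDxk hD).
have Dx4 : D 4%N x = 0 by rewrite (hDxk hD).
have D11 : D 1%N 1 = 0 by rewrite (hD1 hD).
have D21 : D 2%N 1 = 0 by rewrite (hD1 hD).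
have D31 : D 3%N 1 = 0 by rewrite (hD1 hD).
have D41 : D 4%N 1 = 0 by rewrite (hD1 hD).
rewrite expr1n (hD0 hD) D11 D21 D31 D41 !mulr0 !addr0 mulr1 in E0.
rewrite (hD0 hD) Dx1 Dx2 Dx3 Dx4 !mulr0 !addr0 mulr1 in E1.
have xx1 : D 1%N (x ^+ 2) = x * 1 + x by rewrite expr2 (hDMx hD 0) Dx1 (hD0 hD).
have xx2 : D 2%N (x ^+ 2) = x * 0 + 1 by rewrite expr2 (hDMx hD 1) Dx1 Dx2.
have xx3 : D 3%N (x ^+ 2) = x * 0 + 0 by rewrite expr2 (hDMx hD 2) Dx3 Dx2.
have xx4 : D 4%N (x ^+ 2) = x * 0 + 0 by rewrite expr2 (hDMx hD 3) Dx3 Dx4.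
rewrite (hD0 hD) xx1 xx2 xx3 xx4 in E3.
have cc := cst c dc.
have ce := cst e de.
have Dxy k : (0 < k <= 4)%N -> D k (x * y) = c^-1 * D k x.
  move=> /andP[k0 k4]; apply: (mulfI c0); rewrite mulVKf // -(hDcM hD _ cc) // G.
  by rewrite (hDD hD) (hDN hD) ce ?k0 ?k4 // subr0.
have xyE : x * y = c^-1 * (x - e) by rewrite -G mulKf.
rewrite exprMn (hD0 hD) !Dxy // Dx1 Dx2 Dx3 Dx4 xyE in E4.
have w0E : w (inord 0) = - v0.
  by apply/eqP; rewrite -addr_eq0 addrC; apply/eqP; rewrite -[RHS]E0 mulr1.
have w1E : w (inord 1) = - (v0 * x ^+ q + w (inord 0) * x).
  by apply/eqP; rewrite -addr_eq0 addrC; apply/eqP; rewrite -[RHS]E1 addrA.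
rewrite w1E w0E in E4.
have vE : v0 * (c * (x ^+ q * y ^+ q) - x ^+ q + e) = 0.
  by rewrite -[RHS](mulr0 c) -E4; field.
have v00 : v0 = 0.
  by move/eqP: vE; rewrite mulf_eq0 (negPf Ene) orbF => /eqP.
have w00 : w (inord 0) = 0 by rewrite w0E v00 oppr0.
have w10 : w (inord 1) = 0 by rewrite w1E v00 w00 !mul0r addr0 oppr0.
have w20 : w (inord 2) = 0 by rewrite -[RHS]E3 v00 w00 w10; ring.
have yE : y = c^-1 + (- (c^-1 * e)) * x^-1.
  by apply: (mulfI x0); rewrite xyE; field; rewrite x0 c0.
have dci : D 1%N c^-1 = 0 := hD1V hD c0 dc.
have dd : D 1%N (- (c^-1 * e)) = 0 by apply: d1opp; apply: d1mul.
have [d' d'E] : exists d', d' = - (c^-1 * e) by exists (- (c^-1 * e)).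
rewrite -d'E in yE dd.
have d'0 : d' != 0 by rewrite d'E oppr_eq0 mulf_neq0 // invr_eq0.
have y2E : y ^+ 2 = c^-1 * c^-1 + (c^-1 * d' + d' * c^-1) * x^-1 + (d' * d') * x^-1 ^+ 2.
  by rewrite {1}yE; ring.
have Dy k : (0 < k <= 4)%N -> D k y = d' * D k x^-1.
  move=> /andP[k0 k4]; rewrite {1}yE (hDD hD) (cst _ dci) ?k0 ?k4 // add0r.
  by rewrite (hDcM hD _ (cst _ dd)).
have Dy2 k : (0 < k <= 4)%N ->
    D k (y ^+ 2) = (c^-1 * d' + d' * c^-1) * D k x^-1 + (d' * d') * D k (x^-1 ^+ 2).
  have dA : D 1%N (c^-1 * c^-1) = 0 by apply: d1mul.
  have dB : D 1%N (c^-1 * d' + d' * c^-1) = 0 by apply: d1add; apply: d1mul.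
  have dC : D 1%N (d' * d') = 0 by apply: d1mul.
  move=> /andP[k0 k4]; rewrite y2E !(hDD hD) (cst _ dA) ?k0 ?k4 // add0r.
  by rewrite (hDcM hD _ (cst _ dB)) // (hDcM hD _ (cst _ dC)).
rewrite (Dy 3%N) // (Dy 4%N) // !(hDinvx hD x0) v00 w00 w10 w20 in E2.
have w3E : w (inord 3) = w (inord 4) * x^-1.
  have : d' * x^-1 ^+ 4 * (w (inord 4) * x^-1 - w (inord 3)) = 0.
    by rewrite -[RHS]E2; ring.
  have nz : d' * x^-1 ^+ 4 != 0 by rewrite mulf_neq0 // expf_neq0 // invr_eq0.
  by move/eqP; rewrite mulf_eq0 (negPf nz) /= subr_eq0 => /eqP.
rewrite (Dy2 3%N) // (Dy2 4%N) // !(hDinvx hD x0) !(hDinvx2 hD x0) v00 w00 w10 w20 w3E in E5.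
have w40 : w (inord 4) = 0.
  have : (d' * d') * x^-1 ^+ 6 * w (inord 4) = 0.
    by rewrite -[RHS]E5; ring.
  have nz : d' * d' * x^-1 ^+ 6 != 0.
    apply: mulf_neq0; first exact: mulf_neq0.
    by rewrite expf_neq0 // invr_eq0.
  by move/eqP; rewrite mulf_eq0 (negPf nz) /= => /eqP.
have w30 : w (inord 3) = 0 by rewrite w3E w40 mul0r.
have v0E : v = 0.
  apply: row6_eq0 => //.
  by apply: ord5_inord.
by move: vn0; rewrite v0E eqxx.
Qed.
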